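(* Let $R$ be a Noetherian local ring and let $\varphi$ be an integral local self-map of $R$ (i.e. $R$ is integral over $\varphi(R)$). Assume that every minimal prime ideal of $R$ contains $\ker\varphi$. Then the map ${}^a\varphi:\operatorname{Spec}(R)\to\operatorname{Spec}(R)$, $\mathfrak{p}\mapsto\varphi^{-1}(\mathfrak{p})$, restricts to a permutation of the finite set $\operatorname{Min}(R)$ of minimal prime ideals of $R$.
   Context: A self-map of a ring is a ring endomorphism; local means $\varphi(\mathfrak{m})\subseteq\mathfrak{m}$. *)

(* Defs.v *)
From HB Require Import structures.
From mathcomp Require Import all_boot all_order all_algebra.
Set Implicit Arguments. Unset Strict Implicit. Unset Printing Implicit Defensive.
Import GRing.Theory.
Local Open Scope ring_scope.

Section Ideals.
Variable R : comNzRingType.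

Definition ideal_sub (I J : R -> Prop) : Prop := forall x, I x -> J x.
Definition ideal_eq (I J : R -> Prop) : Prop := forall x, I x <-> J x.

Definition is_ideal (I : R -> Prop) : Prop :=
  [/\ I 0, (forall x y, I x -> I y -> I (x + y)) & (forall r x, I x -> I (r * x))].

Definition prime_ideal (P : R -> Prop) : Prop :=
  [/\ is_ideal P, ~ P 1 & (forall a b, P (a * b) -> P a \/ P b)].

Definition maximal_ideal (M : R -> Prop) : Prop :=
  [/\ is_ideal M, ~ M 1 &
     (forall J, is_ideal J -> ideal_sub M J -> J 1 \/ ideal_sub J M)].

Definition minimal_prime (P : R -> Prop) : Prop :=
  prime_ideal P /\ (forall Q, prime_ideal Q -> ideal_sub Q P -> ideal_sub P Q).

Definition noetherian : Prop :=
  forall I : nat -> (R -> Prop), (forall n, is_ideal (I n)) ->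
    (forall n, ideal_sub (I n) (I n.+1)) ->
    exists N, forall k, (N <= k)%N -> ideal_sub (I k) (I N).

Definition local_ring (m : R -> Prop) : Prop :=
  maximal_ideal m /\ (forall n, maximal_ideal n -> ideal_eq n m).

End Ideals.

Definition preimage_ideal (R : comNzRingType) (phi : R -> R) (P : R -> Prop) : R -> Prop :=
  fun x => P (phi x).

Definition ker_map (R : comNzRingType) (phi : R -> R) : R -> Prop :=
  fun x => phi x = 0.

(* R is integral over phi(R): each x is a root of a monic polynomial
   with coefficients in phi(R). *)
Definition integral_map (R : comNzRingType) (phi : {rmorphism R -> R}) : Prop :=
  forall x : R, exists p : {poly R}, p \is monic /\ (map_poly phi p).[x] = 0.

(* Main.v *)
Require Import Defs.
From HB Require Import structures.
From mathcomp Require Import all_boot all_order all_algebra.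
From Stdlib Require Import Classical ClassicalEpsilon.
From mathcomp Require Import ring.
Set Implicit Arguments. Unset Strict Implicit.
Import GRing.Theory.
Local Open Scope ring_scope.

Definition addI (R : comNzRingType) (I : R -> Prop) (a : R) : R -> Prop :=
  fun x => exists i r, I i /\ x = i + r * a.

Lemma addI_ideal (R : comNzRingType) (I : R -> Prop) a :
  is_ideal I -> is_ideal (addI I a).
Proof.
case=> I0 HDD HMM; split.
- by exists 0, 0; split=> //; ring.
- move=> x y [i [r [Ii ->]]] [j [s [Ij ->]]]; exists (i + j), (r + s); split.
    by apply: HDD. ring.
- move=> t x [i [r [Ii ->]]]; exists (t * i), (t * r); split.
    by apply: HMM. ring.
Qed.

Lemma addI_sub (R : comNzRingType) (I : R -> Prop) a :
  is_ideal I -> ideal_sub I (addI I a).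
Proof. by case=> I0 _ _ x Ix; exists x, 0; split=> //; rewrite mul0r addr0. Qed.

Lemma addI_a (R : comNzRingType) (I : R -> Prop) a :
  is_ideal I -> addI I a a.
Proof. by case=> I0 _ _; exists 0, 1; split=> //; rewrite mul1r add0r. Qed.

Lemma noeth_ind (R : comNzRingType) (P : (R -> Prop) -> Prop) :
  noetherian R ->
  (forall I, is_ideal I -> (forall J, is_ideal J -> ideal_sub I J -> ~ ideal_sub J I -> P J) -> P I) ->
  forall I, is_ideal I -> P I.
Proof.
move=> HN Hstep I0 HI0; apply: NNPP => nP0.
pose T := {I : R -> Prop | is_ideal I /\ ~ P I}.
have step : forall t : T, exists u : T, ideal_sub (proj1_sig t) (proj1_sig u) /\ ~ ideal_sub (proj1_sig u) (proj1_sig t).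
  move=> [I [HI nPI]] /=; apply: NNPP => H; apply: nPI; apply: Hstep => // J HJ IJ JI.
  apply: NNPP => nPJ; apply: H; exists (exist _ J (conj HJ nPJ)) => /=; by split.
pose next (t : T) : T := proj1_sig (constructive_indefinite_description _ (step t)).
have nextP : forall t, ideal_sub (proj1_sig t) (proj1_sig (next t)) /\ ~ ideal_sub (proj1_sig (next t)) (proj1_sig t).
  by move=> t; rewrite /next; case: constructive_indefinite_description.
pose t0 : T := exist _ I0 (conj HI0 nP0).
pose ch n := proj1_sig (iter n next t0).
have [N HNk] := HN ch (fun n => proj1 (proj2_sig (iter n next t0))) (fun n => proj1 (nextP (iter n next t0))).
by apply: (proj2 (nextP (iter N next t0))); apply: (HNk N.+1).
Qed.

Lemma not_prime_split (R : comNzRingType) (I : R -> Prop) :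
  is_ideal I -> ~ I 1 -> ~ prime_ideal I -> exists a b, I (a * b) /\ ~ I a /\ ~ I b.
Proof.
move=> HI n1 np; apply: NNPP => H; apply: np; split=> // a b Iab.
apply: NNPP => H2; apply: H; exists a, b; split=> //; split=> Hc; apply: H2; [left|right]=> //.
Qed.

Lemma avoid_prime (R : comNzRingType) (S : R -> Prop) :
  noetherian R -> S 1 -> (forall x y, S x -> S y -> S (x * y)) ->
  forall I, is_ideal I -> (forall x, I x -> ~ S x) ->
  exists Q, [/\ prime_ideal Q, ideal_sub I Q & forall x, Q x -> ~ S x].
Proof.
move=> HN S1 SM.
apply: (noeth_ind (P := fun I => (forall x, I x -> ~ S x) ->
  exists Q, [/\ prime_ideal Q, ideal_sub I Q & forall x, Q x -> ~ S x])) => // I HI IH dis.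
have n1 : ~ I 1 by move=> I1; exact: dis _ I1 S1.
case: (classic (prime_ideal I)) => [pI|npI].
  by exists I; split.
have [a [b [Iab [nIa nIb]]]] := not_prime_split HI n1 npI.
have Hcase : forall c, ~ I c -> (forall x, addI I c x -> ~ S x) ->
   exists Q, [/\ prime_ideal Q, ideal_sub I Q & forall x, Q x -> ~ S x].
  move=> c nIc disc.
  have [Q [pQ sQ dQ]] := IH _ (addI_ideal c HI) (addI_sub c HI) (fun H => nIc (H _ (addI_a c HI))) disc.
  exists Q; split=> // x Ix; apply: sQ; exact: addI_sub.
case: (classic (forall x, addI I a x -> ~ S x)) => [da|nda]; first exact: Hcase a nIa da.
case: (classic (forall x, addI I b x -> ~ S x)) => [db|ndb]; first exact: Hcase b nIb db.
exfalso.
have [s1 [[i [r [Ii e1]]] Ss1]] : exists s1, addI I a s1 /\ S s1.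
  by apply: NNPP => H; apply: nda => x Hx Sx; apply: H; exists x.
have [s2 [[j [t [Ij e2]]] Ss2]] : exists s2, addI I b s2 /\ S s2.
  by apply: NNPP => H; apply: ndb => x Hx Sx; apply: H; exists x.
case: HI => I0 HDD HMM.
apply: (dis (s1 * s2)); last exact: SM.
have -> : s1 * s2 = i * s2 + (r * a * j + (r * t) * (a * b)).
  by rewrite e1 e2 !mulrDl !mulrDr !mulrA (mulrC (r * a) j) !mulrA (mulrAC r a t) addrA.
apply: (HDD _ _ _ (HDD _ _ (HMM (r * a) j Ij) (HMM (r * t) _ Iab))); rewrite mulrC; exact: HMM.
Qed.

Fixpoint mem_l (R : Type) (X : R -> Prop) (L : seq (R -> Prop)) : Prop :=
  match L with [::] => False | Y :: L' => Y = X \/ mem_l X L' end.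

Lemma mem_l_cat (R : Type) (X : R -> Prop) L1 L2 :
  mem_l X (L1 ++ L2) <-> mem_l X L1 \/ mem_l X L2.
Proof.
elim: L1 => [|Y L1 IH] /=; first by split; [right|case].
rewrite IH; tauto.
Qed.

Lemma prime_cover (R : comNzRingType) :
  noetherian R -> forall I, is_ideal I ->
  exists L : seq (R -> Prop),
    (forall X, mem_l X L -> prime_ideal X /\ ideal_sub I X) /\
    (forall Q, prime_ideal Q -> ideal_sub I Q -> exists X, mem_l X L /\ ideal_sub X Q).
Proof.
move=> HN; apply: noeth_ind => // I HI IH.
case: (classic (I 1)) => [I1|n1].
  exists [::]; split=> // Q [_ nQ1 _] IQ; by case: nQ1; apply: IQ.
case: (classic (prime_ideal I)) => [pI|npI].
  exists [:: I]; split.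
    by move=> X [<-|//]; split=> // x.
  by move=> Q _ IQ; exists I; split=> //; left.
have [a [b [Iab [nIa nIb]]]] := not_prime_split HI n1 npI.
have [La [La1 La2]] := IH _ (addI_ideal a HI) (addI_sub a HI) (fun H => nIa (H _ (addI_a a HI))).
have [Lb [Lb1 Lb2]] := IH _ (addI_ideal b HI) (addI_sub b HI) (fun H => nIb (H _ (addI_a b HI))).
exists (La ++ Lb); split.
  move=> X /mem_l_cat [H|H].
    have [pX sX] := La1 _ H; split=> // x Ix; apply: sX; exact: addI_sub.
  have [pX sX] := Lb1 _ H; split=> // x Ix; apply: sX; exact: addI_sub.
move=> Q pQ IQ; have [[Q0 QD QM] _ Qp] := pQ.
have Hc : forall c, Q c -> ideal_sub (addI I c) Q.
  by move=> c Qc x [i [r [Ii ->]]]; apply: QD; [exact: IQ | exact: QM].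
case: (Qp a b (IQ _ Iab)) => [Qa|Qb].
  have [X [mX sX]] := La2 Q pQ (Hc a Qa); exists X; split=> //; apply/mem_l_cat; by left.
have [X [mX sX]] := Lb2 Q pQ (Hc b Qb); exists X; split=> //; apply/mem_l_cat; by right.
Qed.

Lemma min_in_list (R : comNzRingType) (L : seq (R -> Prop)) (Q : R -> Prop) :
  (exists X, mem_l X L /\ ideal_sub X Q) ->
  exists X, [/\ mem_l X L, ideal_sub X Q & forall Y, mem_l Y L -> ideal_sub Y X -> ideal_sub X Y].
Proof.
elim: L => [|Y L IH] /=; first by case=> X [].
move=> H0.
case: (classic (exists X, mem_l X L /\ ideal_sub X Q)) => [H|H].
  have [X [mX sX minX]] := IH H.
  case: (classic (ideal_sub Y X)) => [YX|nYX].
    exists Y; split; [by left | by move=> x /YX /sX |].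
    move=> Z [<-|mZ] ZY; first by [].
    by move=> x /YX /(minX Z mZ (fun z Zz => YX z (ZY z Zz))).
  exists X; split; [by right | by [] |].
  by move=> Z [<-|mZ] ZX; [exfalso; apply: nYX | apply: minX].
have YQ : ideal_sub Y Q.
  case: H0 => X [[<-|mX] sX] //; by case: H; exists X.
exists Y; split; [by left | by [] |].
move=> Z [<-|mZ] ZY; first by [].
exfalso; apply: H; exists Z; split=> // x Zx; exact: YQ (ZY x Zx).
Qed.

Lemma exists_min_prime (R : comNzRingType) : noetherian R ->
  forall Q : R -> Prop, prime_ideal Q -> exists P, minimal_prime P /\ ideal_sub P Q.
Proof.
move=> HN.
have zI : is_ideal (fun x : R => x = 0).
  split=> //; [by move=> x y -> ->; rewrite addr0 | by move=> r x ->; rewrite mulr0].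
have [L [L1 L2]] := prime_cover HN zI.
have p0 : forall P : R -> Prop, prime_ideal P -> ideal_sub (fun x => x = 0) P.
  by move=> P [[h _ _] _ _] x ->.
move=> Q pQ.
have [X [mX sX minX]] := min_in_list (L2 Q pQ (p0 Q pQ)).
exists X; split=> //; split; first by case: (L1 X mX).
move=> Q' pQ' Q'X.
have [Z [mZ ZQ']] := L2 Q' pQ' (p0 Q' pQ').
by move=> x /(minX Z mZ (fun z Zz => Q'X z (ZQ' z Zz))) /ZQ'.
Qed.

Lemma ideal_eq_sym (R : comNzRingType) (X Y : R -> Prop) : ideal_eq X Y -> ideal_eq Y X.
Proof. by move=> H x; split=> /H. Qed.

Lemma ideal_eq_trans (R : comNzRingType) (X Y Z : R -> Prop) :
  ideal_eq X Y -> ideal_eq Y Z -> ideal_eq X Z.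
Proof. by move=> H1 H2 x; rewrite H1 H2. Qed.

Lemma prime_eq (R : comNzRingType) (X Y : R -> Prop) :
  ideal_eq X Y -> prime_ideal Y -> prime_ideal X.
Proof.
move=> E [[Y0 YD YM] nY1 Yp]; split; first split.
- by apply/E.
- by move=> x y /E Hx /E Hy; apply/E; apply: YD.
- by move=> r x /E Hx; apply/E; apply: YM.
- by move/E.
- by move=> a b /E /Yp [H|H]; [left|right]; apply/E.
Qed.

Lemma minimal_eq (R : comNzRingType) (X Y : R -> Prop) :
  ideal_eq X Y -> minimal_prime Y -> minimal_prime X.
Proof.
move=> E [pY mY]; split; first exact: prime_eq pY.
move=> Q pQ QX x /E Yx; apply: (mY Q pQ) => // z /QX /E //.
Qed.

Lemma preimage_prime (R : comNzRingType) (phi : {rmorphism R -> R}) (P : R -> Prop) :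
  prime_ideal P -> prime_ideal (preimage_ideal phi P).
Proof.
rewrite /preimage_ideal => -[[P0 PD PM] nP1 Pp]; split; first split.
- by rewrite rmorph0.
- by move=> x y Hx Hy; rewrite rmorphD; apply: PD.
- by move=> r x Hx; rewrite rmorphM; apply: PM.
- by rewrite rmorph1.
- by move=> a b; rewrite rmorphM => /Pp.
Qed.

Lemma preimage_eq (R : comNzRingType) (phi : {rmorphism R -> R}) (P Q : R -> Prop) :
  ideal_eq P Q -> ideal_eq (preimage_ideal phi P) (preimage_ideal phi Q).
Proof. by move=> E x; apply: E. Qed.

Fixpoint distinct_l (R : comNzRingType) (M : seq (R -> Prop)) : Prop :=
  match M with [::] => True | X :: M' => (forall Y, mem_l Y M' -> ~ ideal_eq X Y) /\ distinct_l M' end.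

Lemma dedupe (R : comNzRingType) (L : seq (R -> Prop)) :
  exists M : seq (R -> Prop), [/\ forall X, mem_l X M -> minimal_prime X, distinct_l M &
    forall X, mem_l X L -> minimal_prime X -> exists Y, mem_l Y M /\ ideal_eq X Y].
Proof.
elim: L => [|X L [M [M1 M2 M3]]]; first by exists [::]; split.
case: (classic (minimal_prime X /\ forall Y, mem_l Y M -> ~ ideal_eq X Y)) => [[mX nX]|H].
  exists (X :: M); split=> //=.
  - by move=> Z [<-|/M1].
  - move=> Z [<-|mZ] mpZ; first by exists X; split; [left|].
    have [Y [mY eY]] := M3 Z mZ mpZ; exists Y; split=> //; by right.
exists M; split=> // Z /= [<-|mZ] mpZ; last exact: M3.
apply: NNPP => H2; apply: H; split=> // Y mY eY; apply: H2; by exists Y.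
Qed.

Lemma mem_nth_l (R : comNzRingType) (M : seq (R -> Prop)) X :
  mem_l X M -> exists2 i, (i < size M)%N & nth (fun _ => False) M i = X.
Proof.
elim: M => [|Y M IH] //= [<-|/IH [i Hi <-]]; first by exists 0%N.
by exists i.+1.
Qed.

Lemma nth_mem_l (R : comNzRingType) (M : seq (R -> Prop)) i :
  (i < size M)%N -> mem_l (nth (fun _ => False) M i) M.
Proof. by elim: M i => [|Y M IH] [|i] //= Hi; [left | right; apply: IH]. Qed.

Lemma distinct_nth (R : comNzRingType) (M : seq (R -> Prop)) i j :
  distinct_l M -> (i < size M)%N -> (j < size M)%N ->
  ideal_eq (nth (fun _ => False) M i) (nth (fun _ => False) M j) -> i = j.
Proof.
elim: M i j => [|Y M IH] [|i] [|j] //= [D1 D2] Hi Hj E.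
- by exfalso; apply: (D1 _ (nth_mem_l Hj)).
- by exfalso; apply: (D1 _ (nth_mem_l Hi)); apply: ideal_eq_sym.
- by congr S; apply: IH.
Qed.

Lemma surj_lemma (R : comNzRingType) (phi : {rmorphism R -> R}) :
  noetherian R ->
  (forall P, minimal_prime P -> ideal_sub (ker_map phi) P) ->
  forall Q, minimal_prime Q ->
      exists2 P, minimal_prime P & ideal_eq (preimage_ideal phi P) Q.
Proof.
move=> HN Hker Q mQ.
have [pQ minQ] := mQ.
have [[Q0 QD QM] nQ1 Qp] := pQ.
pose S x := exists u, ~ Q u /\ x = phi u.
have S1 : S 1 by exists 1; split=> //; rewrite rmorph1.
have SM : forall x y, S x -> S y -> S (x * y).
  move=> x y [u [nu ->]] [v [nv ->]]; exists (u * v); split; last by rewrite rmorphM.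
  by case/Qp.
have zI : is_ideal (fun x : R => x = 0).
  split=> //; [by move=> x y -> ->; rewrite addr0 | by move=> r x ->; rewrite mulr0].
have zS : forall x : R, x = 0 -> ~ S x.
  by move=> x -> [u [nu e]]; apply: nu; apply: (Hker Q mQ); rewrite /ker_map -e.
have [P' [pP' _ dP']] := avoid_prime HN S1 SM zI zS.
have [P [mP PP']] := exists_min_prime HN pP'.
exists P => //.
have sub : ideal_sub (preimage_ideal phi P) Q.
  move=> x Px; apply: NNPP => nx; apply: (dP' (phi x)); first exact: PP'.
  by exists x.
move=> x; split; first exact: sub.
exact: (minQ _ (preimage_prime phi (proj1 mP)) sub).
Qed.
Unset Implicit Arguments.

Theorem mainTheorem14 (R : comNzRingType) (m : R -> Prop)
  (phi : {rmorphism R -> R})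
  (HN : noetherian R) (Hloc : local_ring m)
  (Hlocal_map : forall x, m x -> m (phi x))
  (Hint : integral_map phi)
  (Hker : forall P, minimal_prime P -> ideal_sub (ker_map phi) P) :
  (exists (n : nat) (f : nat -> (R -> Prop)),
      forall P, minimal_prime P -> exists2 i, (i < n)%N & ideal_eq P (f i)) /\
  (forall P, minimal_prime P -> minimal_prime (preimage_ideal phi P)) /\
  (forall P Q, minimal_prime P -> minimal_prime Q ->
      ideal_eq (preimage_ideal phi P) (preimage_ideal phi Q) -> ideal_eq P Q) /\
  (forall Q, minimal_prime Q ->
      exists2 P, minimal_prime P & ideal_eq (preimage_ideal phi P) Q).
Proof.
have zI : is_ideal (fun x : R => x = 0).
  split=> //; [by move=> x y -> ->; rewrite addr0 | by move=> r x ->; rewrite mulr0].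
have p0 : forall P : R -> Prop, prime_ideal P -> ideal_sub (fun x => x = 0) P.
  by move=> P [[h _ _] _ _] x ->.
have [L [L1 L2]] := prime_cover HN zI.
have [M [M1 M2 M3]] := dedupe L.
pose d : R -> Prop := fun _ => False.
pose F := preimage_ideal phi.
have cover : forall P, minimal_prime P -> exists2 i, (i < size M)%N & ideal_eq P (nth d M i).
  move=> P mP; have [X [mX XP]] := L2 P (proj1 mP) (p0 P (proj1 mP)).
  have PX : ideal_eq P X.
    move=> x; split; last exact: XP.
    exact: (proj2 mP X (proj1 (L1 X mX)) XP).
  have mpX : minimal_prime X by apply: minimal_eq mP; apply: ideal_eq_sym.
  have [Y [mY XY]] := M3 X mX mpX.
  have [i Hi eY] := mem_nth_l mY.
  by exists i => //; rewrite eY; apply: ideal_eq_trans XY.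
have surj := surj_lemma HN Hker.
pose n := size M.
pose Mi (i : 'I_n) := nth d M i.
have Mmin : forall i : 'I_n, minimal_prime (Mi i) by move=> i; apply: M1; apply: nth_mem_l.
have H : forall j : 'I_n, exists i : 'I_n, ideal_eq (F (Mi i)) (Mi j).
  move=> j; have [P mP eP] := surj _ (Mmin j).
  have [k Hk ek] := cover P mP.
  exists (Ordinal Hk); apply: ideal_eq_trans eP.
  by apply: preimage_eq; apply: ideal_eq_sym.
pose h j := proj1_sig (constructive_indefinite_description _ (H j)).
have hP : forall j, ideal_eq (F (Mi (h j))) (Mi j).
  by move=> j; rewrite /h; case: constructive_indefinite_description.
have hinj : injective h.
  move=> j j' e; apply: val_inj; apply: (distinct_nth M2 (ltn_ord j) (ltn_ord j')).
  have := hP j; rewrite e => e1.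
  exact: ideal_eq_trans (ideal_eq_sym e1) (hP j').
have [g hg gh] := injF_bij hinj.
have key : forall P, minimal_prime P -> exists j, ideal_eq P (Mi (h j)).
  move=> P mP; have [k Hk ek] := cover P mP.
  by exists (g (Ordinal Hk)); rewrite gh.
have Fkey : forall P j, ideal_eq P (Mi (h j)) -> ideal_eq (F P) (Mi j).
  by move=> P j e; apply: ideal_eq_trans (hP j); apply: preimage_eq.
split; first by exists (size M), (nth d M).
split.
  move=> P mP; have [j ej] := key P mP.
  exact: minimal_eq (Fkey _ _ ej) (Mmin j).
split; last exact: surj.
move=> P Q mP mQ eF.
have [j ej] := key P mP; have [j' ej'] := key Q mQ.
have jj : j = j'.
  apply: val_inj; apply: (distinct_nth M2 (ltn_ord j) (ltn_ord j')).
  apply: ideal_eq_trans (Fkey _ _ ej'); apply: ideal_eq_trans eF.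
  exact: ideal_eq_sym (Fkey _ _ ej).
by apply: ideal_eq_trans ej _; rewrite jj; apply: ideal_eq_sym.
Qed.
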